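(* Let $F$ be a finite field with $q=|F|$. Let $m,n\in\mathbb{N}$ with $m\le n+1$, and let $x\in F^{m+n+1}$. Then $$(q-1)\cdot[\operatorname{rank}(H_{m,n}(x))\le m] = \sum_{\substack{v\in F^{1\times(m+1)}\\ v\ne0}}[v\,H_{m,n}(x)=0] \;-\; q\sum_{\substack{v\in F^{1\times m}\\ v\ne 0}}[v\,H_{m-1,n+1}(x)=0].$$
   Context: $\mathbb{N}=\{0,1,2,\ldots\}$. For a statement $\mathcal{A}$, $[\mathcal{A}]$ is $1$ if $\mathcal{A}$ is true and $0$ otherwise. For $x=(x_0,\ldots,x_N)\in F^{N+1}$ and integers $p,p'\ge -1$ with $p+p'\le N$, $H_{p,p'}(x)=(x_{i+j})_{0\le i\le p,\,0\le j\le p'}$ (a $(p+1)\times(p'+1)$ matrix). Row vectors $v$ multiply matrices from the left. *)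

(* Defs.v *)
From mathcomp Require Import all_boot all_order all_algebra.
Set Implicit Arguments. Unset Strict Implicit. Unset Printing Implicit Defensive.
Import GRing.Theory.
Local Open Scope ring_scope.

(* Hankel matrix H_{k-1,l-1}(x) as a k x l matrix with entries x_{i+j},
   where x : 'rV[F]_N is (x_0, ..., x_{N-1}).  Indices are used with
   i + j < N in all applications below (inord is only a total fallback). *)
Definition hankel (F : Type) (N k l : nat) (x : 'rV[F]_N.+1) : 'M[F]_(k, l) :=
  \matrix_(i < k, j < l) x 0 (inord (i + j)).
Arguments hankel {F} N k l x.

(* Main.v *)
Require Import Defs.
From mathcomp Require Import all_boot all_order all_algebra.
From mathcomp Require Import zify ring.
Set Implicit Arguments. Unset Strict Implicit. Unset Printing Implicit Defensive.
Import GRing.Theory.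
Local Open Scope ring_scope.

Section H.
Variables (F : finFieldType) (m n : nat) (hmn : (m <= n.+1)%N) (x : 'rV[F]_(m + n).+1).

Definition X (i : nat) : F := x 0 (inord i).
Definition A := hankel (m + n) m.+1 n.+1 x.
Definition B := hankel (m + n) m n.+2 x.
Definition cx : 'cV[F]_m.+1 := \col_(i < m.+1) X (i + n.+1).
Definition cf (w : 'rV[F]_m.+1) := (w *m cx) 0 0.
Definition inS (w : 'rV[F]_m.+1) := [&& w *m A == 0, w 0 ord_max == 0 & cf w == 0].

Lemma AE (w : 'rV[F]_m.+1) (j : 'I_n.+1) : (w *m A) 0 j = \sum_(i < m.+1) w 0 i * X (i + j).
Proof. by rewrite !mxE; apply: eq_bigr => i _; rewrite !mxE. Qed.

Lemma cfE w : cf w = \sum_(i < m.+1) w 0 i * X (i + n.+1).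
Proof. by rewrite /cf !mxE; apply: eq_bigr => i _; rewrite !mxE. Qed.

Lemma hA (w : 'rV[F]_m.+1) : w *m A = 0 -> forall j, (j <= n)%N -> \sum_(i < m.+1) w 0 i * X (i + j) = 0.
Proof.
move=> H j hj; have := congr1 (fun M : 'M[F]_(1, n.+1) => M 0 (@inord n j)) H.
by rewrite AE !mxE inordK.
Qed.

Lemma key (w u : 'rV[F]_m.+1) : w *m A = 0 -> u *m A = 0 -> w 0 ord_max = 0 -> u 0 ord_max * cf w = 0.
Proof.
move=> Hw Hu wm.
pose k := (n.+1 - m)%N.
pose T := \sum_(l < m.+1) \sum_(i < m.+1) u 0 l * (w 0 i * X (i + (l + k))).
have T1 : T = u 0 ord_max * cf w.
  rewrite /T big_ord_recr /= big1 ?add0r => [|l _].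
    rewrite cfE mulr_sumr; apply: eq_bigr => i _.
    by rewrite /k subnKC.
  rewrite -mulr_sumr hA ?mulr0 //= /k; have := ltn_ord l; lia.
have T2 : T = 0.
  rewrite /T exchange_big big_ord_recr /= wm.
  rewrite [X in _ + X]big1 ?addr0 => [|l _]; last by rewrite mul0r mulr0.
  apply: big1 => i _.
  suff -> : \sum_(l < m.+1) u 0 l * (w 0 (widen_ord (leqnSn m) i) * X (widen_ord (leqnSn m) i + (l + k)))
     = w 0 (widen_ord (leqnSn m) i) * \sum_(l < m.+1) u 0 l * X (l + (i + k)).
    rewrite hA ?mulr0 //= /k; have := ltn_ord i; lia.
  rewrite mulr_sumr; apply: eq_bigr => l _; rewrite mulrCA; congr (_ * (_ * X _)).
  rewrite /=; lia.
by rewrite -T1 T2.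
Qed.


Definition ext (v : 'rV[F]_m) : 'rV[F]_m.+1 :=
  \row_(i < m.+1) (if @insub _ (fun k => k < m)%N _ (val i) is Some j then v 0 j else 0).

Lemma ext_w v (j : 'I_m) : ext v 0 (widen_ord (leqnSn m) j) = v 0 j.
Proof.
rewrite mxE; case: insubP => [k _ ek|]; last by rewrite /= ltn_ord.
by congr (v 0 _); apply/val_inj; rewrite ek.
Qed.
Definition g (v : 'rV[F]_m) (j : nat) := \sum_(i < m) v 0 i * X (i + j).

Lemma ext_last v : ext v 0 ord_max = 0.
Proof. by rewrite mxE insubF //= ltnn. Qed.

Lemma ext_sum v (f : nat -> F) :
  \sum_(i < m.+1) ext v 0 i * f i = \sum_(i < m) v 0 i * f i.
Proof.
rewrite big_ord_recr /= ext_last mul0r addr0; apply: eq_bigr => i _.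
by rewrite ext_w.
Qed.

Lemma extA v (j : 'I_n.+1) : (ext v *m A) 0 j = g v j.
Proof. by rewrite AE (ext_sum v (fun i => X (i + j))). Qed.

Lemma extc v : cf (ext v) = g v n.+1.
Proof. by rewrite cfE (ext_sum v (fun i => X (i + n.+1))). Qed.

Lemma BE v (j : 'I_n.+2) : (v *m B) 0 j = g v j.
Proof. by rewrite !mxE; apply: eq_bigr => i _; rewrite !mxE. Qed.

Lemma inS_ext v : inS (ext v) = (v *m B == 0).
Proof.
apply/idP/idP.
  case/and3P => /eqP hA0 _ /eqP hc; apply/eqP/rowP => j; rewrite BE mxE.
  have [jn|jn] := ltnP j n.+1.
    have := congr1 (fun M : 'M[F]_(1, n.+1) => M 0 (Ordinal jn)) hA0.
    by rewrite extA mxE.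
  have -> : (j : nat) = n.+1 by have := ltn_ord j; lia.
  by rewrite -extc.
move=> /eqP hB; apply/and3P; split; last 2 first.
- by rewrite ext_last.
- by rewrite extc -(BE v ord_max) hB mxE.
apply/eqP/rowP => j; rewrite extA mxE -(BE v (widen_ord (leqnSn _) j)) hB mxE.
done.
Qed.

Lemma ext_inj : injective ext.
Proof.
move=> v v' /rowP H; apply/rowP => j.
by have := H (widen_ord (leqnSn _) j); rewrite !ext_w.
Qed.

Definition KA := [set w : 'rV[F]_m.+1 | w *m A == 0].
Definition KB := [set v : 'rV[F]_m | v *m B == 0].
Definition SS := [set w : 'rV[F]_m.+1 | inS w].

Lemma SS_ext : SS = ext @: KB.
Proof.
apply/setP => w; rewrite inE; apply/idP/imsetP.
  move=> hw; exists (\row_(i < m) w 0 (widen_ord (leqnSn _) i)).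
    rewrite inE -inS_ext.
    suff -> : ext (\row_(i < m) w 0 (widen_ord (leqnSn _) i)) = w by [].
    apply/rowP => i; have [hi|hi] := ltnP i m.
      have -> : i = widen_ord (leqnSn _) (Ordinal hi) by apply/val_inj.
      by rewrite ext_w mxE.
    have -> : i = ord_max by apply/val_inj; have := ltn_ord i; move: hi => /= hi; lia.
    by rewrite ext_last; case/and3P: hw => _ /eqP -> _.
  symmetry; apply/rowP => i; have [hi|hi] := ltnP i m.
    have -> : i = widen_ord (leqnSn _) (Ordinal hi) by apply/val_inj.
    by rewrite ext_w mxE.
  have -> : i = ord_max by apply/val_inj; have := ltn_ord i; move: hi => /= hi; lia.
  by rewrite ext_last; case/and3P: hw => _ /eqP -> _.
by case=> v; rewrite inE -inS_ext => h ->.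
Qed.

Lemma card_SS : #|SS| = #|KB|.
Proof. by rewrite SS_ext card_imset //; apply: ext_inj. Qed.

Lemma lin_mul (a b : 'rV[F]_m.+1) c d (M : 'M[F]_(m.+1, n.+1)) :
  a *m M = 0 -> b *m M = 0 -> (c *: a + d *: b) *m M = 0.
Proof. by move=> ha hb; rewrite mulmxDl -!scalemxAl ha hb !scaler0 addr0. Qed.

Lemma cf_lin (a b : 'rV[F]_m.+1) c d : cf (c *: a + d *: b) = c * cf a + d * cf b.
Proof. by rewrite /cf mulmxDl -!scalemxAl !mxE. Qed.

Lemma inS_lin (a b : 'rV[F]_m.+1) c d : inS a -> inS b -> inS (c *: a + d *: b).
Proof.
case/and3P => /eqP a1 /eqP a2 /eqP a3; case/and3P => /eqP b1 /eqP b2 /eqP b3.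
apply/and3P; split; apply/eqP.
- exact: lin_mul.
- by rewrite !mxE a2 b2 !mulr0 addr0.
- by rewrite cf_lin a3 b3 !mulr0 addr0.
Qed.

Definition sh (w : 'rV[F]_m.+1) : 'rV[F]_m.+1 :=
  \row_(i < m.+1) (if unlift ord0 i is Some j then w 0 (widen_ord (leqnSn m) j) else 0).

Lemma shE w (i : 'I_m.+1) : sh w 0 i = if (i == 0 :> nat) then 0 else w 0 (inord i.-1).
Proof.
rewrite mxE; case: unliftP => [j ->|->] //=.
congr (w 0 _); apply/val_inj; rewrite /= add0n inordK //; have hj : (j < m)%N := ltn_ord j; rewrite ltnS; exact: ltnW.
Qed.

Lemma iter_shE k w (i : 'I_m.+1) :
  iter k sh w 0 i = if (k <= i)%N then w 0 (inord (i - k)) else 0.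
Proof.
elim: k i => [|k IH] i /=.
  by rewrite subn0 inord_val.
rewrite shE; case: eqP => [->|hi] //.
rewrite IH inordK; last by have := ltn_ord i; lia.
case: ifP => h1; case: ifP => h2 //; try (exfalso; move: h1 h2; lia).
by congr (w 0 (inord _)); lia.
Qed.

Lemma sh_KA w : inS w -> sh w *m A = 0.
Proof.
case/and3P => /eqP w1 /eqP w2 /eqP w3; apply/rowP => j; rewrite AE mxE.
rewrite big_ord_recl shE /= mul0r add0r.
transitivity (\sum_(i < m.+1) w 0 i * X (i + j.+1)).
  rewrite big_ord_recr /= w2 mul0r addr0; apply: eq_bigr => i _.
  rewrite shE /= add0n.
  have hi : (i < m.+1)%N by rewrite ltnW // ltnS.
  congr (w 0 _ * X _); first by apply/val_inj; rewrite /= inordK.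
  rewrite /bump /=; lia.
have [jn|jn] := ltnP j n.
  by apply: hA.
have -> : j.+1 = n.+1 by have := ltn_ord j; lia.
by rewrite -cfE.
Qed.

Lemma exists_out (w : 'rV[F]_m.+1) : w *m A = 0 -> w != 0 -> exists w0 : 'rV[F]_m.+1, (w0 *m A == 0) && ~~ inS w0.
Proof.
move=> hw nz; apply/existsP; apply: contraT => /existsPn hall.
have hS v : v *m A = 0 -> inS v.
  move=> hv; have := hall v; rewrite hv eqxx /=; exact: negbNE.
have hit k : iter k sh w *m A = 0.
  by elim: k => [|k IH] //=; apply: sh_KA; apply: hS.
case/rV0Pn: nz => i hi.
have := hS _ (hit (m - i)%N); case/and3P => _ /eqP.
rewrite iter_shE /= ifT; last by lia.
have -> : (inord (m - (m - i)) : 'I_m.+1) = i.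
  by apply/val_inj; rewrite /= inordK; have := ltn_ord i; lia.
by move=> h; rewrite h eqxx in hi.
Qed.

Lemma card_KA_out (w0 : 'rV[F]_m.+1) : w0 *m A = 0 -> ~~ inS w0 ->
  #|KA| = (#|SS| * #|F|)%N.
Proof.
move=> hw0 nS.
pose f (p : 'rV[F]_m.+1 * F) := p.1 + p.2 *: w0.
have -> : KA = f @: (setX SS [set: F]).
  apply/setP => w; rewrite inE; apply/idP/imsetP.
  - move=> /eqP hw.
    have ex : exists a, inS (w - a *: w0).
      have e : forall a, w - a *: w0 = 1 *: w + (- a) *: w0.
        by move=> a; rewrite scale1r scaleNr.
      have hA' a : (w - a *: w0) *m A = 0 by rewrite e; apply: lin_mul.
      have [a0z|a0nz] := eqVneq (w0 0 ord_max) 0.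
      + have c0 : cf w0 != 0.
          by apply: contra nS => /eqP c0; rewrite /inS hw0 a0z c0 !eqxx.
        have wm : w 0 ord_max = 0.
          have := key hw0 hw a0z; move/eqP; rewrite mulf_eq0 (negbTE c0) orbF.
          by move/eqP.
        exists (cf w / cf w0); apply/and3P; split; apply/eqP => //.
          by rewrite !mxE wm a0z mulr0 subrr.
        by rewrite e cf_lin mul1r mulNr divfK // subrr.
      + exists (w 0 ord_max / w0 0 ord_max); apply/and3P; split; apply/eqP => //.
          by rewrite !mxE divfK // subrr.
        have := key (hA' (w 0 ord_max / w0 0 ord_max)) hw0.
        rewrite !mxE divfK // subrr => /(_ erefl) /eqP.
        by rewrite mulf_eq0 (negbTE a0nz) /= => /eqP.
    case: ex => a ha; exists (w - a *: w0, a); first by rewrite in_setX !inE ha.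
    by rewrite /f /= subrK.
  - case=> [[s a]]; rewrite in_setX !inE => /andP[hs _] ->.
    apply/eqP; rewrite /f /= -[s]scale1r; apply: lin_mul => //.
    by case/and3P: hs => /eqP.
rewrite card_in_imset ?cardsX ?cardsT //.
move=> [s a] [s' a']; rewrite !in_setX !inE => /andP[hs _] /andP[hs' _].
rewrite /f /= => E.
have [aa|na] := eqVneq a a'.
  by move: E; rewrite aa => /addIr ->.
exfalso; move/negP: nS; apply.
have -> : w0 = (a' - a)^-1 *: s + (- (a' - a)^-1) *: s'.
  rewrite scaleNr -scalerBr.
  have -> : s - s' = (a' - a) *: w0.
    by rewrite scalerBl -[s](addrK (a *: w0)) E addrAC [s' + _]addrC addrK.
  by rewrite scalerA mulVf ?scale1r // subr_eq0 eq_sym.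
exact: inS_lin.
Qed.

Lemma ext0 : ext 0 = 0.
Proof. apply/rowP => i; rewrite !mxE; by case: insub => [j|]; rewrite ?mxE. Qed.

Lemma rank_ker : (\rank A <= m)%N = [exists w : 'rV[F]_m.+1, (w != 0) && (w *m A == 0)].
Proof.
have hr : (\rank A <= m)%N = ~~ row_free A.
  by rewrite /row_free eqn_leq rank_leq_row /= -ltnNge ltnS.
rewrite hr; apply/idP/existsP.
  rewrite -kermx_eq0 => /rowV0Pn [v /sub_kermxP hv nz]; exists v.
  by rewrite nz hv eqxx.
case=> w /andP[nz /eqP hw]; apply/negP => rf.
have := row_free_inj rf; move/(_ 1%N w 0); rewrite hw mul0mx => /(_ erefl) hw0.
by rewrite hw0 eqxx in nz.
Qed.

Lemma main_count :
  ((\rank A <= m)%N /\ #|KA| = (#|KB| * #|F|)%N) \/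
  (~~ (\rank A <= m)%N /\ #|KA| = 1%N /\ #|KB| = 1%N).
Proof.
rewrite rank_ker; case: existsP => [[w /andP[nz /eqP hw]]|nex].
  left; split => //.
  have [w0 /andP[/eqP h0 h1]] := exists_out hw nz.
  by rewrite (card_KA_out h0 h1) card_SS.
right; split => //.
have kA : KA = [set 0].
  apply/setP => w; rewrite !inE; apply/idP/idP => [hw|/eqP ->]; last by rewrite mul0mx.
  apply/negPn/negP => nz; apply: nex; exists w; by rewrite nz hw.
rewrite kA cards1; split => //.
suff -> : KB = [set 0] by rewrite cards1.
apply/setP => v; rewrite !inE; apply/idP/idP => [hv|/eqP ->]; last by rewrite mul0mx.
have : ext v \in KA by rewrite inE; rewrite -inS_ext in hv; case/and3P: hv.
rewrite kA inE -ext0 => /eqP /ext_inj ->; done.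
Qed.

End H.

Lemma sum_ker (F : finFieldType) k l (M : 'M[F]_(k, l)) :
  (\sum_(v : 'rV[F]_k | v != 0) nat_of_bool (v *m M == 0%R)).+1
  = #|[set v : 'rV[F]_k | v *m M == 0]|.
Proof.
rewrite (cardsD1 0) inE mul0mx eqxx add1n; congr S.
transitivity (\sum_(v : 'rV[F]_k | (v != 0) && (v *m M == 0)) 1%N).
  by rewrite [RHS]big_mkcondr; apply: eq_bigr => v _; case: (v *m M == 0).
by rewrite sum1_card; apply: eq_card => v; rewrite !inE.
Qed.

Unset Implicit Arguments.
Set Strict Implicit.
Theorem proposition12 (F : finFieldType) (m n : nat) (hmn : (m <= n.+1)%N)
    (x : 'rV[F]_(m + n).+1) :
  (#|F| - 1)%:Z * (nat_of_bool (\rank (hankel (m + n) m.+1 n.+1 x) <= m)%N)%:Z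
  = (\sum_(v : 'rV[F]_m.+1 | v != 0)
        nat_of_bool (v *m hankel (m + n) m.+1 n.+1 x == 0%R))%:Z
    - (#|F|)%:Z * (\sum_(v : 'rV[F]_m | v != 0)
        nat_of_bool (v *m hankel (m + n) m n.+2 x == 0%R))%:Z.
Proof.
have h1 := sum_ker (hankel (m + n) m.+1 n.+1 x).
have h2 := sum_ker (hankel (m + n) m n.+2 x).
have hq := card_finNzRing_gt1 F.
have hc := main_count hmn x.
move: h1 h2 hc; rewrite /KA /KB /A /B.
move: (\sum_(v : 'rV[F]_m.+1 | v != 0%R) (_ : nat))%N => sA.
move: (\sum_(v : 'rV[F]_m | v != 0%R) (_ : nat))%N => sB.
move: (#|[set v : 'rV[F]_m.+1 | _]|) => kA.
move: (#|[set v : 'rV[F]_m | _]|) => kB.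
move: (\rank _ <= m)%N => b.
move: #|F| hq => q hq.
case: b => /= h1 h2 [[hb e]|[hb [e1 e2]]] //; subst; lia.
Qed.
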